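(* Assume the block-sparse setting described in the context, with adversarial noise satisfying $\|w\|_2\le\varepsilon$ for a known constant $\varepsilon>0$, and assume $x\neq 0$. Suppose that $$(1-(d-1)\nu)\,x_{\min} > 2\varepsilon\sqrt{1+(d-1)\nu} + (2k-1)\,d\,\mu_B\,x_{\max}.$$ Then the block-thresholding (BTH) estimate satisfies $S\subseteq \hat S$ (i.e., BTH identifies all elements of the support of $x$), and $$\|\hat x_{\mathrm{BTH}}-x\|_2^2 \le \frac{\varepsilon^2}{1-(d-1)\nu-(k-1)d\mu_B}.$$
   Context: Setting: $N=Md$. For $v\in\mathbb{C}^N$, $v[i]=(v_{(i-1)d+1},\dots,v_{id})^T$ is its $i$-th block ($1\le i\le M$); for a matrix $A$ with $N$ columns, $A[i]$ is the submatrix of columns $(i-1)d+1,\dots,id$. The (block) support is $\mathrm{supp}(v)=\{i: v[i]\neq 0\}$. For an index set $I=\{i_1<\dots<i_p\}$, $v_I$ is the concatenation of the blocks $v[i_1],\dots,v[i_p]$ and $A_I=[A[i_1],\dots,A[i_p]]$. The unknown deterministic vector $x\in\mathbb{C}^N$ has at most $k$ nonzero blocks (with $k$ known); $S=\mathrm{supp}(x)$, $s=|S|$, $x_{\max}=\max_{i\in S}\|x[i]\|_2$, $x_{\min}=\min_{i\in S}\|x[i]\|_2$. Observations are $y=Dx+w$ where $D\in\mathbb{C}^{L\times N}$ is known with columns $d_1,\dots,d_N$ of unit $\ell_2$ norm, $L<N$, and $D_I$ has full column rank for every index set $I$ with $|I|\le k$. Block coherence: $\mu_B=\max_{i\neq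 j}\frac1d\|D[i]^*D[j]\|$ (spectral norm). Sub-coherence: $\nu=\max_{1\le \ell\le M}\max_{(\ell-1)d+1\le i\neq j\le \ell d}|d_i^*d_j|$. BTH algorithm: compute $\rho_i=\|D[i]^*y\|_2$ for $i=1,\dots,M$; choose a set $\hat S$ of $k$ indices with $\rho_i\ge\rho_j$ for all $i\in\hat S$, $j\notin\hat S$ (ties broken arbitrarily); output $\hat x_{\mathrm{BTH}}$ defined by $(\hat x_{\mathrm{BTH}})_{\hat S}=D_{\hat S}^{\dagger}y$ (least squares on the blocks of $\hat S$) and zero on all other blocks. Here $^\dagger$ is the Moore–Penrose pseudoinverse. *)

(* Defs.v *)
(* Complex scalars: an arbitrary numClosedFieldType C
   (the abstract "complex numbers" structure of MathComp). *)
From HB Require Import structures.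
From mathcomp Require Import all_boot all_order all_algebra.
Set Implicit Arguments. Unset Strict Implicit. Unset Printing Implicit Defensive.
Import Order.TTheory GRing.Theory Num.Theory.
Local Open Scope ring_scope.

Lemma bidx_proof (m d : nat) (i : 'I_m) (r : 'I_d) : (i * d + r < m * d)%N.
Proof.
apply: (@leq_trans (i.+1 * d)); first by rewrite mulSn [(d + _)%N]addnC ltn_add2l.
by rewrite leq_mul2r ltn_ord orbT.
Qed.

(* global index (i-1)d + r of entry r of block i (0-based) *)
Definition bidx (m d : nat) (i : 'I_m) (r : 'I_d) : 'I_(m * d) :=
  Ordinal (bidx_proof i r).

Lemma dpos (m d : nat) (p : 'I_(m * d)) : (0 < d)%N.
Proof. by case: d p => // -[p]; rewrite muln0. Qed.

Lemma blk_of_proof (m d : nat) (p : 'I_(m * d)) : (p %/ d < m)%N.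
Proof. by rewrite ltn_divLR ?(dpos p) // ltn_ord. Qed.

Lemma off_of_proof (m d : nat) (p : 'I_(m * d)) : (p %% d < d)%N.
Proof. exact: ltn_pmod (dpos p). Qed.

Definition blk_of (m d : nat) (p : 'I_(m * d)) : 'I_m := Ordinal (blk_of_proof p).
Definition off_of (m d : nat) (p : 'I_(m * d)) : 'I_d := Ordinal (off_of_proof p).

Section Defs.
Variable C : numClosedFieldType.
Variables (L M d : nat).

Definition adj (m n : nat) (A : 'M[C]_(m, n)) : 'M[C]_(n, m) := (map_mx Num.conj A)^T.

Definition vnorm2 (n : nat) (v : 'cV[C]_n) : C := \sum_i `|v i 0| ^+ 2.
Definition vnorm (n : nat) (v : 'cV[C]_n) : C := sqrtC (vnorm2 v).

Definition blkv (v : 'cV[C]_(M * d)) (i : 'I_M) : 'cV[C]_d :=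
  \col_r v (bidx i r) 0.
Definition blkm (A : 'M[C]_(L, M * d)) (i : 'I_M) : 'M[C]_(L, d) :=
  \matrix_(a, r) A a (bidx i r).

Definition supp (v : 'cV[C]_(M * d)) : {set 'I_M} := [set i | blkv v i != 0].

(* v_I : concatenation of the blocks v[i], i in I, in increasing order of i *)
Definition subv (v : 'cV[C]_(M * d)) (I : {set 'I_M}) : 'cV[C]_(#|I| * d) :=
  \col_p v (bidx (enum_val (blk_of p)) (off_of p)) 0.
(* A_I : concatenation of the column blocks A[i], i in I, increasing order *)
Definition subm (A : 'M[C]_(L, M * d)) (I : {set 'I_M}) : 'M[C]_(L, #|I| * d) :=
  \matrix_(a, p) A a (bidx (enum_val (blk_of p)) (off_of p)).

End Defs.

Definition is_specnorm (C : numClosedFieldType) (m n : nat) (A : 'M[C]_(m, n)) (c : C) :=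
  (forall v : 'cV[C]_n, vnorm (A *m v) <= c * vnorm v) /\
  (forall c', (forall v : 'cV[C]_n, vnorm (A *m v) <= c' * vnorm v) -> c <= c').

Definition is_pinv (C : numClosedFieldType) (m n : nat)
  (A : 'M[C]_(m, n)) (P : 'M[C]_(n, m)) :=
  [/\ A *m P *m A = A, P *m A *m P = P,
      adj (A *m P) = A *m P & adj (P *m A) = P *m A].

(* block coherence mu_B = max_{i <> j} (1/d) ||D[i]^* D[j]||  (0 if M <= 1) *)
Definition block_coherence (C : numClosedFieldType) (L M d : nat)
  (D : 'M[C]_(L, M * d)) (muB : C) :=
  exists nr : 'I_M -> 'I_M -> C,
    (forall i j, is_specnorm (adj (blkm D i) *m blkm D j) (nr i j)) /\
    muB = \big[Num.max/0]_(i : 'I_M) \big[Num.max/0]_(j : 'I_M | j != i)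
            (nr i j / d%:R).

(* sub-coherence nu = max over blocks l, and distinct columns r1 <> r2 of
   block l, of |d_{r1}^* d_{r2}|  (0 if d = 1) *)
Definition subcoherence (C : numClosedFieldType) (L M d : nat)
  (D : 'M[C]_(L, M * d)) : C :=
  \big[Num.max/0]_(l : 'I_M) \big[Num.max/0]_(r1 : 'I_d)
    \big[Num.max/0]_(r2 : 'I_d | r2 != r1)
      `|(adj (col (bidx l r1) D) *m col (bidx l r2) D) 0 0|.

(* x_max = max_{i in S} ||x[i]||,  x_min = min_{i in S} ||x[i]||
   (S nonempty; x_min is computed as a min seeded with x_max, which is
   an upper bound of all the terms) *)
Definition xmax (C : numClosedFieldType) (M d : nat) (x : 'cV[C]_(M * d)) : C :=
  \big[Num.max/0]_(i in supp x) vnorm (blkv x i).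
Definition xmin (C : numClosedFieldType) (M d : nat) (x : 'cV[C]_(M * d)) : C :=
  \big[Num.min/xmax x]_(i in supp x) vnorm (blkv x i).

(* Main.v *)
Require Import Defs.
From HB Require Import structures.
From mathcomp Require Import all_boot all_order all_algebra.
Set Implicit Arguments. Unset Strict Implicit. Unset Printing Implicit Defensive.
Import Order.TTheory GRing.Theory Num.Theory.
Local Open Scope ring_scope.

Section Norms.
Variable C : numClosedFieldType.

Definition ip (n : nat) (u v : 'cV[C]_n) : C := (adj u *m v) 0 0.

Lemma ipE n (u v : 'cV[C]_n) : ip u v = \sum_i (u i 0)^* * v i 0.
Proof. by rewrite /ip mxE; apply: eq_bigr => i _; rewrite !mxE. Qed.

Lemma ip_dot n (u v : 'cV[C]_n) : ip u v = dotmx v^T u^T.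
Proof.
rewrite ipE dotmxE mxE; apply: eq_bigr => i _; rewrite !mxE mulrC //.
Qed.

Lemma vnorm2_ip n (v : 'cV[C]_n) : vnorm2 v = ip v v.
Proof. by rewrite ipE; apply: eq_bigr => i _; rewrite normCK mulrC. Qed.

Lemma vnorm2_dot n (v : 'cV[C]_n) : vnorm2 v = dotmx v^T v^T.
Proof. by rewrite vnorm2_ip ip_dot. Qed.

Lemma vnorm2_ge0 n (v : 'cV[C]_n) : 0 <= vnorm2 v.
Proof. by apply: sumr_ge0 => i _; rewrite exprn_ge0. Qed.

Lemma vnorm_ge0 n (v : 'cV[C]_n) : 0 <= vnorm v.
Proof. by rewrite /vnorm sqrtC_ge0 vnorm2_ge0. Qed.

Lemma vnorm_sqr n (v : 'cV[C]_n) : vnorm v ^+ 2 = vnorm2 v.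
Proof. by rewrite /vnorm sqrtCK. Qed.

Lemma vnorm_dot n (v : 'cV[C]_n) : vnorm v = sqrtC (dotmx v^T v^T).
Proof. by rewrite /vnorm vnorm2_dot. Qed.

Lemma CS n (u v : 'cV[C]_n) : `|ip u v| <= vnorm u * vnorm v.
Proof.
rewrite ip_dot !vnorm_dot mulrC.
exact: (leif_le (@CauchySchwarz_sqrt C _ (@dotmx C n) v^T u^T)).
Qed.

Lemma vnormD n (u v : 'cV[C]_n) : vnorm (u + v) <= vnorm u + vnorm v.
Proof.
rewrite !vnorm_dot linearD /=.
exact: (leif_le (@triangle_lerif C _ (@dotmx C n) u^T v^T)).
Qed.

Lemma vnorm0 n : vnorm (0 : 'cV[C]_n) = 0.
Proof. by rewrite /vnorm /vnorm2 big1 ?sqrtC0 // => i _; rewrite mxE normr0 expr0n. Qed.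

Lemma vnormN n (v : 'cV[C]_n) : vnorm (- v) = vnorm v.
Proof. by rewrite /vnorm /vnorm2; congr sqrtC; apply: eq_bigr => i _; rewrite mxE normrN. Qed.

Lemma vnorm_sum n (I : finType) (P : pred I) (f : I -> 'cV[C]_n) :
  vnorm (\sum_(i | P i) f i) <= \sum_(i | P i) vnorm (f i).
Proof.
elim/big_rec2: _ => [|i y z _ Hz]; first by rewrite vnorm0.
by apply: le_trans (vnormD _ _) _; rewrite lerD2l.
Qed.

Lemma vnormB_ge n (u v : 'cV[C]_n) : vnorm u - vnorm v <= vnorm (u + v).
Proof.
rewrite lerBlDr; have := vnormD (u + v) (- v).
by rewrite addrK vnormN.
Qed.

Lemma adjM m n p (A : 'M[C]_(m, n)) (B : 'M[C]_(n, p)) :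
  adj (A *m B) = adj B *m adj A.
Proof. by rewrite /adj map_mxM trmx_mul. Qed.

Lemma adjK m n (A : 'M[C]_(m, n)) : adj (adj A) = A.
Proof. by apply/matrixP => i j; rewrite !mxE conjCK. Qed.

Lemma ip_mul m n (A : 'M[C]_(m, n)) u v : ip u (A *m v) = ip (adj A *m u) v.
Proof. by rewrite /ip adjM adjK mulmxA. Qed.

Lemma ip_conj n (u v : 'cV[C]_n) : ip v u = (ip u v)^*.
Proof. by rewrite !ipE rmorph_sum; apply: eq_bigr => i _; rewrite rmorphM /= conjCK mulrC. Qed.

Lemma ipDr n (u v w : 'cV[C]_n) : ip u (v + w) = ip u v + ip u w.
Proof. by rewrite /ip mulmxDr mxE. Qed.
Lemma ip_sumr n (I : finType) (P : pred I) (u : 'cV[C]_n) f :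
  ip u (\sum_(i | P i) f i) = \sum_(i | P i) ip u (f i).
Proof. by rewrite /ip mulmx_sumr summxE. Qed.
Lemma ip_suml n (I : finType) (P : pred I) (u : 'cV[C]_n) f :
  ip (\sum_(i | P i) f i) u = \sum_(i | P i) ip (f i) u.
Proof. by rewrite ip_conj ip_sumr rmorph_sum; apply: eq_bigr => i _; rewrite /= -ip_conj. Qed.

Lemma ip_vnorm n (u : 'cV[C]_n) : ip u u = vnorm u ^+ 2.
Proof. by rewrite vnorm_sqr vnorm2_ip. Qed.

End Norms.

Lemma blk_bidx (m d : nat) (i : 'I_m) (r : 'I_d) : blk_of (bidx i r) = i.
Proof.
apply: val_inj => /=; have d0 : (0 < d)%N by case: d r => [[]|].
by rewrite divnMDl // divn_small ?addn0.
Qed.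

Lemma off_bidx (m d : nat) (i : 'I_m) (r : 'I_d) : off_of (bidx i r) = r.
Proof.
by apply: val_inj => /=; rewrite modnMDl modn_small.
Qed.

Lemma bidx_blk_off (m d : nat) (p : 'I_(m * d)) : bidx (blk_of p) (off_of p) = p.
Proof. by apply: val_inj => /=; rewrite -divn_eq. Qed.

Lemma sum_blocks (R : nmodType) (m d : nat) (F : 'I_(m * d) -> R) :
  \sum_p F p = \sum_(i < m) \sum_(r < d) F (bidx i r).
Proof.
rewrite pair_big /=.
rewrite (reindex (fun q : 'I_m * 'I_d => bidx q.1 q.2)) //=.
exists (fun p => (blk_of p, off_of p)) => [q _|p _] /=.
  by rewrite blk_bidx off_bidx; case: q.
by rewrite bidx_blk_off.
Qed.

Section Blocks.
Variable C : numClosedFieldType.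

Lemma mul_blocks L M d (D : 'M[C]_(L, M * d)) (v : 'cV[C]_(M * d)) :
  D *m v = \sum_i blkm D i *m blkv v i.
Proof.
apply/matrixP => a b; rewrite !mxE summxE sum_blocks.
apply: eq_bigr => i _; rewrite !mxE; apply: eq_bigr => r _; rewrite !mxE. by rewrite (ord1 b).
Qed.

Lemma vnorm2_blocks M d (v : 'cV[C]_(M * d)) :
  vnorm2 v = \sum_i vnorm2 (blkv v i).
Proof.
rewrite /vnorm2 sum_blocks; apply: eq_bigr => i _; apply: eq_bigr => r _.
by rewrite mxE.
Qed.

Lemma blkm_subm L M d (D : 'M[C]_(L, M * d)) (I : {set 'I_M}) q :
  blkm (subm D I) q = blkm D (enum_val q).
Proof. by apply/matrixP => a r; rewrite !mxE blk_bidx off_bidx. Qed.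

Lemma blkv_subv M d (v : 'cV[C]_(M * d)) (I : {set 'I_M}) q :
  blkv (subv v I) q = blkv v (enum_val q).
Proof. by apply/matrixP => a r; rewrite !mxE blk_bidx off_bidx. Qed.

Lemma sum_supp M (V : nmodType) (I : {set 'I_M}) (F : 'I_M -> V) :
  (forall i, i \notin I -> F i = 0) -> \sum_i F i = \sum_(i in I) F i.
Proof.
move=> H; rewrite [RHS]big_mkcond /=; apply: eq_bigr => i _.
by case: ifP => // /negbT /H.
Qed.

Lemma mul_subm L M d (D : 'M[C]_(L, M * d)) (v : 'cV[C]_(M * d)) (I : {set 'I_M}) :
  (forall i, i \notin I -> blkv v i = 0) ->
  D *m v = subm D I *m subv v I.
Proof.
move=> H; rewrite !mul_blocks (sum_supp (I := I)); last first.
  by move=> i /H ->; rewrite mulmx0.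
rewrite big_enum_val; apply: eq_bigr => q _.
by rewrite blkm_subm blkv_subv.
Qed.

Lemma vnorm2_subv M d (v : 'cV[C]_(M * d)) (I : {set 'I_M}) :
  (forall i, i \notin I -> blkv v i = 0) ->
  vnorm2 v = vnorm2 (subv v I).
Proof.
move=> H; rewrite !vnorm2_blocks (sum_supp (I := I)); last first.
  by move=> i /H ->; rewrite /vnorm2 big1 // => r _; rewrite mxE normr0 expr0n.
by rewrite big_enum_val; apply: eq_bigr => q _; rewrite blkv_subv.
Qed.

Lemma subvB M d (u v : 'cV[C]_(M * d)) (I : {set 'I_M}) :
  subv (u - v) I = subv u I - subv v I.
Proof. by apply/matrixP => a b; rewrite !mxE. Qed.

Lemma blkvB M d (u v : 'cV[C]_(M * d)) i : blkv (u - v) i = blkv u i - blkv v i.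
Proof. by apply/matrixP => a b; rewrite !mxE. Qed.

Lemma embed M d (I : {set 'I_M}) (z : 'cV[C]_(#|I| * d)) :
  exists v : 'cV[C]_(M * d),
    (forall i, i \notin I -> blkv v i = 0) /\ subv v I = z.
Proof.
case: (pickP (mem I)) => [i0 Hi0|I0]; last first.
  have c0 : #|I| = 0%N by apply: eq_card0.
  exists 0; split => [i _|]; first by apply/matrixP => a b; rewrite !mxE.
  apply/matrixP => p b; exfalso; have := ltn_ord p; move: (nat_of_ord p) => n; by rewrite c0.
pose v : 'cV[C]_(M * d) := \col_p (if blk_of p \in I then
   z (bidx (enum_rank_in Hi0 (blk_of p)) (off_of p)) 0 else 0).
exists v; split.
  by move=> i Hi; apply/matrixP => r b; rewrite !mxE blk_bidx (negPf Hi).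
apply/matrixP => p b; rewrite !mxE blk_bidx off_bidx enum_valP enum_valK_in.
by rewrite bidx_blk_off (ord1 b).
Qed.

End Blocks.

Section MaxMin.
Variable C : numClosedFieldType.

Lemma nn_max_ge0 (x y : C) : 0 <= x -> 0 <= y -> 0 <= Num.max x y.
Proof.
move=> hx hy; case: (real_leP (ger0_real hx) (ger0_real hy)) => //.
Qed.

Lemma nn_min_ge0 (x y : C) : 0 <= x -> 0 <= y -> 0 <= Num.min x y.
Proof.
move=> hx hy; case: (real_leP (ger0_real hx) (ger0_real hy)) => //.
Qed.

Lemma nn_max_geL (x y : C) : 0 <= x -> 0 <= y -> x <= Num.max x y.
Proof.
move=> hx hy; case: (real_leP (ger0_real hx) (ger0_real hy)) => // /ltW //.
Qed.

Lemma nn_max_geR (x y : C) : 0 <= x -> 0 <= y -> y <= Num.max x y.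
Proof.
move=> hx hy; case: (real_leP (ger0_real hx) (ger0_real hy)) => // /ltW //.
Qed.

Lemma nn_min_leL (x y : C) : 0 <= x -> 0 <= y -> Num.min x y <= x.
Proof.
move=> hx hy; case: (real_leP (ger0_real hx) (ger0_real hy)) => // /ltW //.
Qed.

Lemma nn_min_leR (x y : C) : 0 <= x -> 0 <= y -> Num.min x y <= y.
Proof.
move=> hx hy; case: (real_leP (ger0_real hx) (ger0_real hy)) => // /ltW //.
Qed.

Lemma nn_bigmax_ge0_seq (I : Type) (r : seq I) (P : pred I) (F : I -> C) :
  (forall i, P i -> 0 <= F i) -> 0 <= \big[Num.max/0]_(j <- r | P j) F j.
Proof.
move=> H; elim/big_rec: _ => // i x Pi hx; exact: nn_max_ge0 (H _ Pi) hx.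
Qed.

Lemma nn_bigmin_ge0_seq (I : Type) (r : seq I) (P : pred I) (F : I -> C) s :
  (forall i, P i -> 0 <= F i) -> 0 <= s -> 0 <= \big[Num.min/s]_(j <- r | P j) F j.
Proof.
move=> H hs; elim/big_rec: _ => // i x Pi hx; exact: nn_min_ge0 (H _ Pi) hx.
Qed.

Lemma nn_bigmax_ge0 (I : finType) (P : pred I) (F : I -> C) :
  (forall i, P i -> 0 <= F i) -> 0 <= \big[Num.max/0]_(j | P j) F j.
Proof.
move=> H; elim/big_rec: _ => // i x Pi hx; exact: nn_max_ge0 (H _ Pi) hx.
Qed.

Lemma nn_bigmax_ge_seq (I : eqType) (r : seq I) (P : pred I) (F : I -> C) :
  (forall i, P i -> 0 <= F i) -> forall i, i \in r -> P i -> F i <= \big[Num.max/0]_(j <- r | P j) F j.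
Proof.
move=> H i; elim: r => // a r IH; rewrite inE big_cons => /orP[/eqP ->|ir] Pi.
  rewrite Pi; apply: nn_max_geL; first exact: H.
  by apply: nn_bigmax_ge0_seq.
case: ifP => Pa; last exact: IH.
apply: le_trans (IH ir Pi) _; apply: nn_max_geR; first exact: H.
exact: nn_bigmax_ge0_seq.
Qed.

Lemma nn_bigmax_ge (I : finType) (P : pred I) (F : I -> C) :
  (forall i, P i -> 0 <= F i) -> forall i, P i -> F i <= \big[Num.max/0]_(j | P j) F j.
Proof. by move=> H i Pi; apply: nn_bigmax_ge_seq => //; rewrite mem_index_enum. Qed.

Lemma nn_bigmin_ge0 (I : finType) (P : pred I) (F : I -> C) s :
  (forall i, P i -> 0 <= F i) -> 0 <= s -> 0 <= \big[Num.min/s]_(j | P j) F j.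
Proof.
move=> H hs; elim/big_rec: _ => // i x Pi hx; exact: nn_min_ge0 (H _ Pi) hx.
Qed.

Lemma nn_bigmin_le_seq (I : eqType) (r : seq I) (P : pred I) (F : I -> C) s :
  (forall i, P i -> 0 <= F i) -> 0 <= s -> forall i, i \in r -> P i -> \big[Num.min/s]_(j <- r | P j) F j <= F i.
Proof.
move=> H hs i; elim: r => // a r IH; rewrite inE big_cons => /orP[/eqP ->|ir] Pi.
  rewrite Pi; apply: nn_min_leL; first exact: H.
  by apply: nn_bigmin_ge0_seq.
case: ifP => Pa; last exact: IH.
apply: le_trans _ (IH ir Pi); apply: nn_min_leR; first exact: H.
exact: nn_bigmin_ge0_seq.
Qed.

Lemma nn_bigmin_le (I : finType) (P : pred I) (F : I -> C) s :
  (forall i, P i -> 0 <= F i) -> 0 <= s -> forall i, P i -> \big[Num.min/s]_(j | P j) F j <= F i.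
Proof. by move=> H hs i Pi; apply: nn_bigmin_le_seq => //; rewrite mem_index_enum. Qed.

End MaxMin.

Section Real.
Variable C : numClosedFieldType.

Lemma two_mul_le (a b : C) : 0 <= a -> 0 <= b -> a * b *+ 2 <= a ^+ 2 + b ^+ 2.
Proof.
move=> ha hb; have : 0 <= (a - b) ^+ 2.
  by rewrite -realEsqr rpredB ?ger0_real.
by rewrite sqrrB addrAC subr_ge0.
Qed.

Lemma sum_neq (T : finType) (A : {pred T}) (g : T -> C) l : l \in A ->
  \sum_(l' in A | l' != l) g l' = \sum_(l' in A) g l' - g l.
Proof. by move=> lA; rewrite [X in _ = X - _](bigD1 l) //= addrC addrK. Qed.

Lemma cross_sum_le (T : finType) (A : {pred T}) (b : T -> C) :
  (forall l, 0 <= b l) ->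
  \sum_(l in A) \sum_(l' in A | l' != l) b l * b l' <=
  (#|A|%:R - 1) * \sum_(l in A) b l ^+ 2.
Proof.
move=> hb; rewrite -(ler_pM2r (ltr0n C 2)).
set S := \sum_(l in A) b l ^+ 2.
apply: (@le_trans _ _ (\sum_(l in A) \sum_(l' in A | l' != l) (b l ^+ 2 + b l' ^+ 2))).
  rewrite mulr_suml; apply: ler_sum => l _; rewrite mulr_suml; apply: ler_sum => l' _.
  by rewrite mulr_natr two_mul_le.
rewrite (eq_bigr (fun l => (#|A|%:R - 1) * b l ^+ 2 + (S - b l ^+ 2))); last first.
  move=> l lA; rewrite big_split /= sum_neq // sum_neq // sumr_const.
  by rewrite mulrBl mul1r mulr_natl.
rewrite big_split /= -mulr_sumr sumrB sumr_const -/S.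
have -> : S *+ #|A| - S = (#|A|%:R - 1) * S by rewrite mulrBl mul1r mulr_natl.
by rewrite mulr_natr mulr2n.
Qed.

End Real.

Section Gram1.
Variable C : numClosedFieldType.
Variables (L M d : nat).
Variable D : 'M[C]_(L, M * d).
Hypothesis unitcol : forall j : 'I_(M * d), vnorm (col j D) = 1.

Lemma ipZl n (c : C) (u v : 'cV[C]_n) : ip (c *: u) v = c^* * ip u v.
Proof. by rewrite !ipE mulr_sumr; apply: eq_bigr => i _; rewrite mxE rmorphM mulrA. Qed.
Lemma ipZr n (c : C) (u v : 'cV[C]_n) : ip u (c *: v) = c * ip u v.
Proof. by rewrite !ipE mulr_sumr; apply: eq_bigr => i _; rewrite mxE mulrCA. Qed.

Lemma blk_cols (l : 'I_M) (z : 'cV[C]_d) :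
  blkm D l *m z = \sum_r z r 0 *: col (bidx l r) D.
Proof.
apply/matrixP => a b; rewrite !mxE summxE; apply: eq_bigr => r _.
by rewrite !mxE mulrC (ord1 b).
Qed.

Lemma nu_ge0 : 0 <= subcoherence D.
Proof. by apply: nn_bigmax_ge0 => l _; apply: nn_bigmax_ge0 => r1 _; apply: nn_bigmax_ge0. Qed.

Lemma ip_cols_le (l : 'I_M) (r s : 'I_d) : s != r ->
  `|ip (col (bidx l r) D) (col (bidx l s) D)| <= subcoherence D.
Proof.
move=> sr; rewrite /subcoherence.
have H1 : forall l r1, 0 <= \big[Num.max/0]_(r2 < d | r2 != r1)
      `|(adj (col (bidx l r1) D) *m col (bidx l r2) D) 0 0|.
  by move=> *; apply: nn_bigmax_ge0.
set F2 := fun l r1 => \big[Num.max/0]_(r2 < d | r2 != r1)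
      `|(adj (col (bidx l r1) D) *m col (bidx l r2) D) 0 0|.
set F1 := fun l => \big[Num.max/0]_(r1 < d) F2 l r1.
have H2 : forall l, 0 <= F1 l by move=> l'; apply: nn_bigmax_ge0 => r1 _; apply: H1.
apply: le_trans _ (nn_bigmax_ge (P := xpredT) (F := F1) (fun l' _ => H2 l') (i := l) isT).
apply: le_trans _ (nn_bigmax_ge (P := xpredT) (F := F2 l) (fun r1 _ => H1 l r1) (i := r) isT).
exact: (nn_bigmax_ge (fun _ _ => normr_ge0 _) (i := s) sr).
Qed.

Lemma vnorm_col j : vnorm2 (col j D) = 1.
Proof. by rewrite -vnorm_sqr unitcol expr1n. Qed.

Lemma blk_gram (l : 'I_M) (z : 'cV[C]_d) :
  `| vnorm (blkm D l *m z) ^+ 2 - vnorm z ^+ 2 | <=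
     (d%:R - 1) * subcoherence D * vnorm z ^+ 2.
Proof.
set a := fun r => col (bidx l r) D.
rewrite -ip_vnorm blk_cols ip_suml.
rewrite (eq_bigr (fun r => \sum_s (z r 0)^* * z s 0 * ip (a r) (a s))); last first.
  by move=> r _; rewrite ip_sumr; apply: eq_bigr => s _; rewrite ipZl ipZr mulrA.
rewrite vnorm_sqr vnorm2_ip ipE -sumrB.
rewrite (eq_bigr (fun r => \sum_(s | s != r) (z r 0)^* * z s 0 * ip (a r) (a s))); last first.
  move=> r _; rewrite (bigD1 r) //= /a ip_vnorm unitcol expr1n mulr1 addrC addrK //.
apply: le_trans (ler_norm_sum _ _ _) _.
apply: (@le_trans _ _ (\sum_r \sum_(s | s != r) `|z r 0| * `|z s 0| * subcoherence D)).
  apply: ler_sum => r _; apply: le_trans (ler_norm_sum _ _ _) _.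
  apply: ler_sum => s sr; rewrite !normrM norm_conjC ler_wpM2l //.
    by rewrite mulr_ge0.
  exact: ip_cols_le.
rewrite (eq_bigr (fun r => (\sum_(s | s != r) `|z r 0| * `|z s 0|) * subcoherence D)); last first.
  by move=> r _; rewrite mulr_suml.
rewrite -mulr_suml mulrAC; apply: ler_wpM2r; first exact: nu_ge0.
have := @cross_sum_le C 'I_d xpredT (fun r => `|z r 0|) (fun _ => normr_ge0 _).
rewrite card_ord; move=> X; apply: le_trans (le_trans _ X) _.
  by rewrite le_eqVlt; apply/orP; left; apply/eqP; apply: eq_bigr => r _; apply: eq_bigl.
rewrite le_eqVlt; apply/orP; left; apply/eqP; congr (_ * _).
by apply: eq_bigr => i _; rewrite normCK mulrC.
Qed.

End Gram1.

Section Bounds.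
Variable C : numClosedFieldType.
Variables (L M d : nat).
Variable D : 'M[C]_(L, M * d).
Hypothesis unitcol : forall j : 'I_(M * d), vnorm (col j D) = 1.
Hypothesis d0 : (0 < d)%N.
Variable muB : C.
Hypothesis Hmu : block_coherence D muB.

Local Notation nu := (subcoherence D).
Local Notation c := ((d%:R - 1) * subcoherence D).

Lemma c_ge0 : 0 <= c.
Proof.
rewrite mulr_ge0 ?nu_ge0 // subr_ge0 ler1n //.
Qed.

Lemma blk_upper l (z : 'cV[C]_d) :
  vnorm (blkm D l *m z) ^+ 2 <= (1 + c) * vnorm z ^+ 2.
Proof.
have := blk_gram unitcol l z.
rewrite real_lter_norml ?rpredB ?ger0_real ?exprn_ge0 ?vnorm_ge0 //.
by case/andP => _; rewrite lerBlDr [(1 + _) * _]mulrDl mul1r addrC.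
Qed.

Lemma blk_lower l (z : 'cV[C]_d) :
  (1 - c) * vnorm z ^+ 2 <= vnorm (blkm D l *m z) ^+ 2.
Proof.
have := blk_gram unitcol l z.
rewrite real_lter_norml ?rpredB ?ger0_real ?exprn_ge0 ?vnorm_ge0 //.
case/andP => H _; move: H; rewrite lerNl opprB lerBlDr => H.
by rewrite mulrBl mul1r lerBlDr addrC.
Qed.

Lemma blk_upper1 l (z : 'cV[C]_d) :
  vnorm (blkm D l *m z) <= sqrtC (1 + c) * vnorm z.
Proof.
have h1 : 0 <= 1 + c by rewrite addr_ge0 ?c_ge0.
rewrite -ler_sqr ?nnegrE ?mulr_ge0 ?sqrtC_ge0 ?vnorm_ge0 ?vnorm2_ge0 //.
by rewrite exprMn [sqrtC (1 + c) ^+ 2]sqrtCK blk_upper.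
Qed.

Lemma adj_blk_noise l (w : 'cV[C]_L) :
  vnorm (adj (blkm D l) *m w) <= sqrtC (1 + c) * vnorm w.
Proof.
set u := adj (blkm D l) *m w.
have hu := vnorm_ge0 u.
have H : vnorm u ^+ 2 <= vnorm u * (sqrtC (1 + c) * vnorm w).
  rewrite -ip_vnorm {1}/u -ip_mul.
  apply: le_trans (real_ler_norm _) _.
    by rewrite ip_mul -/u ip_vnorm ger0_real ?exprn_ge0 ?vnorm_ge0.
  apply: le_trans (CS _ _) _.
  rewrite [X in _ <= X](_ : _ = (sqrtC (1 + c) * vnorm u) * vnorm w); last by rewrite mulrCA mulrA.
  by rewrite mulrC ler_wpM2r ?vnorm_ge0 // blk_upper1.
have [u0|upos] := eqVneq (vnorm u) 0; first by rewrite u0 mulr_ge0 ?vnorm_ge0 // sqrtC_ge0 addr_ge0 ?c_ge0.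
have hup : 0 < vnorm u by rewrite lt_def upos hu.
by move: H; rewrite expr2 ler_pM2l.
Qed.

Lemma gram_lower l (z : 'cV[C]_d) :
  (1 - c) * vnorm z <= vnorm (adj (blkm D l) *m blkm D l *m z).
Proof.
have hz := vnorm_ge0 z.
have H : vnorm z * ((1 - c) * vnorm z) <= vnorm z * vnorm (adj (blkm D l) *m blkm D l *m z).
  rewrite mulrCA -expr2; apply: le_trans (blk_lower l z) _.
  rewrite -ip_vnorm -{1}[blkm D l]adjK -ip_mul mulmxA.
  apply: le_trans (real_ler_norm _) _; last exact: CS.
  by rewrite -mulmxA ip_mul adjK ip_vnorm ger0_real ?exprn_ge0 ?vnorm_ge0.
have [z0|zpos] := eqVneq (vnorm z) 0.
  by rewrite z0 mulr0 vnorm_ge0.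
have hzp : 0 < vnorm z by rewrite lt_def zpos hz.
by move: H; rewrite ler_pM2l.
Qed.

Lemma vnorm_const1 : 0 < vnorm (const_mx 1 : 'cV[C]_d).
Proof.
rewrite /vnorm sqrtC_gt0 /vnorm2 (eq_bigr (fun _ => 1)); last first.
  by move=> i _; rewrite mxE normr1 expr1n.
by rewrite sumr_const card_ord ltr0n.
Qed.

Lemma nr_facts : exists nr : 'I_M -> 'I_M -> C,
  (forall i j z, vnorm (adj (blkm D i) *m blkm D j *m z) <= nr i j * vnorm z) /\
  (forall i j, 0 <= nr i j) /\
  muB = \big[Num.max/0]_(i : 'I_M) \big[Num.max/0]_(j : 'I_M | j != i) (nr i j / d%:R).
Proof.
case: Hmu => nr [Hs ->]; exists nr; split; first by move=> i j z; case: (Hs i j) => H _; apply: H.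
split => // i j; case: (Hs i j) => H _; have := H (const_mx 1).
move=> H1; have := le_trans (vnorm_ge0 _) H1.
by rewrite pmulr_lge0 // vnorm_const1.
Qed.

Lemma muB_ge0 : 0 <= muB.
Proof.
have [nr [_ [H0 ->]]] := nr_facts.
apply: nn_bigmax_ge0 => i _; apply: nn_bigmax_ge0 => j _.
by rewrite divr_ge0 ?ler0n.
Qed.

Lemma cross_le i j (z : 'cV[C]_d) : j != i ->
  vnorm (adj (blkm D i) *m blkm D j *m z) <= d%:R * muB * vnorm z.
Proof.
move=> ji; have [nr [Hs [H0 Hm]]] := nr_facts.
apply: le_trans (Hs i j z) _; rewrite ler_wpM2r ?vnorm_ge0 //.
have dp : 0 < d%:R :> C by rewrite ltr0n.
rewrite -ler_pdivrMl // mulrC Hm.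
have H1 : forall i, 0 <= \big[Num.max/0]_(j : 'I_M | j != i) (nr i j / d%:R).
  by move=> i'; apply: nn_bigmax_ge0 => j' _; rewrite divr_ge0 ?ler0n.
apply: le_trans _ (nn_bigmax_ge (P := xpredT) (F := fun i => \big[Num.max/0]_(j : 'I_M | j != i) (nr i j / d%:R)) (fun i _ => H1 i) (i := i) isT).
by apply: (nn_bigmax_ge (fun j _ => divr_ge0 (H0 i j) (ler0n _ _)) (i := j) ji).
Qed.

End Bounds.

Section Proj.
Variable C : numClosedFieldType.

Lemma ipBr n (u v w : 'cV[C]_n) : ip u (v - w) = ip u v - ip u w.
Proof. by rewrite /ip mulmxBr [LHS]mxE [X in _ + X]mxE. Qed.
Lemma ipBl n (u v w : 'cV[C]_n) : ip (v - w) u = ip v u - ip w u.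
Proof. by rewrite ip_conj ipBr rmorphB /= -!ip_conj. Qed.

Lemma proj_le m (Q : 'M[C]_m) (w : 'cV[C]_m) :
  adj Q = Q -> Q *m Q = Q -> vnorm (Q *m w) ^+ 2 <= vnorm w ^+ 2.
Proof.
move=> hQ hQQ.
have e1 : ip (Q *m w) (Q *m w) = ip w (Q *m w).
  by symmetry; rewrite -{1}hQQ -mulmxA -{1}hQ ip_mul adjK.
have e2 : ip (Q *m w) w = ip w (Q *m w).
  by symmetry; rewrite -{1}hQ ip_mul adjK.
have := exprn_ge0 2 (vnorm_ge0 (w - Q *m w)).
rewrite -!ip_vnorm ipBl !ipBr e1 e2 subrr subr0 subr_ge0 //.
Qed.

End Proj.

Lemma ip_mulL (C : numClosedFieldType) m n (A : 'M[C]_(m, n)) u v : ip (A *m u) v = ip u (adj A *m v).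
Proof. by rewrite ip_mul adjK. Qed.

Section Multi.
Variable C : numClosedFieldType.
Variables (L M d : nat).
Variable D : 'M[C]_(L, M * d).
Hypothesis unitcol : forall j : 'I_(M * d), vnorm (col j D) = 1.
Hypothesis d0 : (0 < d)%N.
Variable muB : C.
Hypothesis Hmu : block_coherence D muB.

Local Notation c := ((d%:R - 1) * subcoherence D).

Lemma gram_multi (I : {set 'I_M}) (v : 'cV[C]_(M * d)) k :
  (#|I| <= k)%N -> (forall i, i \notin I -> blkv v i = 0) ->
  (1 - c - (k%:R - 1) * d%:R * muB) * vnorm v ^+ 2 <= vnorm (D *m v) ^+ 2.
Proof.
move=> Ik Hv.
set u := fun l => blkm D l *m blkv v l.
have eD : D *m v = \sum_(l in I) u l.
  by rewrite mul_blocks (sum_supp (I := I)) // => i /Hv ->; rewrite mulmx0.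
have eN : vnorm v ^+ 2 = \sum_(l in I) vnorm (blkv v l) ^+ 2.
  rewrite vnorm_sqr vnorm2_blocks (sum_supp (I := I)); last first.
    by move=> i /Hv ->; rewrite -vnorm_sqr vnorm0 expr0n.
  by apply: eq_bigr => l _; rewrite vnorm_sqr.
set N := \sum_(l in I) vnorm (blkv v l) ^+ 2 in eN.
set Sd := \sum_(l in I) vnorm (u l) ^+ 2.
set T := \sum_(l in I) \sum_(l' in I | l' != l) ip (u l) (u l').
have eDv : vnorm (D *m v) ^+ 2 = Sd + T.
  rewrite -ip_vnorm eD ip_suml /Sd /T -big_split /=; apply: eq_bigr => l lI.
  by rewrite ip_sumr sum_neq // ip_vnorm addrC subrK.
have hN : 0 <= N by rewrite -eN exprn_ge0 ?vnorm_ge0.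
have hSd : (1 - c) * N <= Sd.
  rewrite /N mulr_sumr; apply: ler_sum => l _; exact: blk_lower.
have hmu := muB_ge0 d0 Hmu.
have hT : `|T| <= (k%:R - 1) * d%:R * muB * N.
  apply: le_trans (ler_norm_sum _ _ _) _.
  apply: (@le_trans _ _ (\sum_(l in I) \sum_(l' in I | l' != l)
        d%:R * muB * (vnorm (blkv v l) * vnorm (blkv v l')))).
    apply: ler_sum => l _; apply: le_trans (ler_norm_sum _ _ _) _.
    apply: ler_sum => l' /andP[_ ll']; rewrite /u ip_mulL mulmxA.
    apply: le_trans (CS _ _) _.
    rewrite mulrCA ler_wpM2l ?vnorm_ge0 //.
    exact: cross_le.
  rewrite -(mulrC N) -!mulrA.
  rewrite (eq_bigr (fun l => d%:R * muB * \sum_(l' in I | l' != l) (vnorm (blkv v l) * vnorm (blkv v l')))); last first.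
    by move=> l _; rewrite mulr_sumr.
  rewrite -mulr_sumr [X in _ <= X]mulrCA mulrA [X in _ <= X]mulrC.
  rewrite ler_wpM2l ?mulr_ge0 ?ler0n //.
  apply: le_trans (cross_sum_le _ (fun l => vnorm_ge0 (blkv v l))) _.
  by rewrite ler_wpM2r // lerD2r ler_nat.
have Treal : T \is Num.real.
  have -> : T = vnorm (D *m v) ^+ 2 - Sd by rewrite eDv addrC addKr.
  by rewrite rpredB ?ger0_real ?exprn_ge0 ?vnorm_ge0 // sumr_ge0 // => l _; rewrite exprn_ge0 ?vnorm_ge0.
rewrite eDv mulrBl eN.
have := (real_lter_norml C).1 T `|T| Treal; rewrite lexx => /esym /andP [hT2 _].
apply: lerD => //; apply: le_trans _ hT2; rewrite lerN2; exact: hT.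
Qed.
End Multi.

Lemma supp_out (C : numClosedFieldType) M d (x : 'cV[C]_(M * d)) i :
  i \notin supp x -> blkv x i = 0.
Proof. by rewrite inE negbK => /eqP. Qed.

Lemma blk_zero (C : numClosedFieldType) M d (x : 'cV[C]_(M * d)) :
  (forall i, blkv x i = 0) -> x = 0.
Proof.
move=> H; apply/matrixP => p b; rewrite mxE (ord1 b).
have := congr1 (fun v : 'cV[C]_d => v (off_of p) 0) (H (blk_of p)).
by rewrite !mxE bidx_blk_off.
Qed.

Unset Implicit Arguments. Set Strict Implicit. Set Printing Implicit Defensive.

Theorem theorem1 (C : numClosedFieldType) (L M d k : nat)
  (D : 'M[C]_(L, M * d)) (x : 'cV[C]_(M * d)) (w y : 'cV[C]_L) (eps muB : C) :
  (0 < d)%N -> (k <= M)%N -> (L < M * d)%N ->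
  (* unit-norm columns *)
  (forall j : 'I_(M * d), vnorm (col j D) = 1) ->
  (* D_I has full column rank whenever |I| <= k *)
  (forall I : {set 'I_M}, (#|I| <= k)%N -> \rank (subm D I) = (#|I| * d)%N) ->
  block_coherence D muB ->
  (* x is block k-sparse and nonzero *)
  (#|supp x| <= k)%N -> x != 0 ->
  (* observation model with bounded adversarial noise *)
  y = D *m x + w -> 0 < eps -> vnorm w <= eps ->
  (* the recovery condition *)
  (1 - (d.-1)%:R * subcoherence D) * xmin x >
    2 * eps * sqrtC (1 + (d.-1)%:R * subcoherence D)
    + ((2 * k).-1)%:R * d%:R * muB * xmax x ->
  (* the BTH estimate, for any admissible tie-breaking *)
  forall (Shat : {set 'I_M}) (P : 'M[C]_(#|Shat| * d, L)) (xhat : 'cV[C]_(M * d)),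
    #|Shat| = k ->
    (forall i j, i \in Shat -> j \notin Shat ->
       vnorm (adj (blkm D j) *m y) <= vnorm (adj (blkm D i) *m y)) ->
    is_pinv (subm D Shat) P ->
    subv xhat Shat = P *m y ->
    (forall i, i \notin Shat -> blkv xhat i = 0) ->
    supp x \subset Shat /\
    vnorm2 (xhat - x) <=
      eps ^+ 2 / (1 - (d.-1)%:R * subcoherence D - (k.-1)%:R * d%:R * muB).
Proof.
move=> d0 kM LMd unitcol rankH Hmu Sk xn0 ey eps0 weps cond Shat P xhat cardS Hsel Hpinv Hsub Hout.
have Ed : (d.-1)%:R = d%:R - 1 :> C by rewrite -subn1 natrB.
rewrite Ed in cond *.
set S := supp x in Sk cond *.
have [i0 i0S] : exists i0, i0 \in S.
  apply/existsP; apply: contraNT xn0; rewrite negb_exists => /forallP H.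
  by apply/eqP/blk_zero => i; apply: supp_out; apply: H.
have k1 : (0 < k)%N by apply: leq_trans Sk; rewrite card_gt0; apply/set0Pn; exists i0.
have Ek : (k.-1)%:R = k%:R - 1 :> C by rewrite -subn1 natrB.
have E2k : ((2 * k).-1)%:R = (k%:R - 1) + k%:R :> C.
  by rewrite -subn1 natrB ?muln_gt0 // natrM mulr_natl mulr2n addrAC.
rewrite Ek.
set c := (d%:R - 1) * subcoherence D in cond *.
set eta := sqrtC (1 + c) in cond.
have hc : 0 <= c by apply: c_ge0.
have hmu : 0 <= muB by apply: (muB_ge0 d0 Hmu).
have heta : 0 <= eta by rewrite sqrtC_ge0 addr_ge0.
have hxF : forall l, 0 <= vnorm (blkv x l) by move=> l; apply: vnorm_ge0.
have hxmax0 : 0 <= xmax x by apply: nn_bigmax_ge0 => i _.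
have hxmax : forall l, l \in S -> vnorm (blkv x l) <= xmax x.
  by move=> l lS; apply: (nn_bigmax_ge (fun i _ => hxF i) (i := l) lS).
have hxmin : forall l, l \in S -> xmin x <= vnorm (blkv x l).
  by move=> l lS; apply: (@nn_bigmin_le C _ _ _ (xmax x) (fun i _ => hxF i) hxmax0 l lS).
have hxmin0 : 0 <= xmin x by apply: nn_bigmin_ge0 => // i _.
set m := d%:R * muB * xmax x.
have hm : 0 <= m by rewrite mulr_ge0 // mulr_ge0.
set e := eta * eps.
have he : 0 <= e by rewrite mulr_ge0 // ltW.
have cond' : (k%:R - 1) * m + e + (k%:R * m + e) < (1 - c) * xmin x.
  move: cond; congr (_ < _); rewrite E2k addrACA -mulrDl addrC /m /e !mulrA; congr (_ + _).
  by rewrite -mulrA mulr_natl mulr2n mulrC.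
have hk1 : 0 <= k%:R - 1 :> C by rewrite subr_ge0 ler1n.
have hpos : 0 <= (k%:R - 1) * m + e + (k%:R * m + e).
  by apply: addr_ge0; apply: addr_ge0 => //; apply: mulr_ge0.
have hxminp : 0 < xmin x.
  rewrite lt_def hxmin0 andbT; apply/eqP => h0; move: cond'; rewrite h0 mulr0 => H.
  by have := le_lt_trans hpos H; rewrite ltxx.
have h1c : 0 < 1 - c.
  by have := le_lt_trans hpos cond'; rewrite pmulr_lgt0.
have Hdec : forall j, adj (blkm D j) *m y =
    \sum_(l in S) adj (blkm D j) *m blkm D l *m blkv x l + adj (blkm D j) *m w.
  move=> j; rewrite ey mulmxDr mul_blocks (sum_supp (I := S)); last first.
    by move=> i /supp_out ->; rewrite mulmx0.
  by rewrite mulmx_sumr; congr (_ + _); apply: eq_bigr => l _; rewrite mulmxA.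
have Hnoise : forall j, vnorm (adj (blkm D j) *m w) <= e.
  move=> j; apply: le_trans (adj_blk_noise unitcol d0 j w) _.
  by rewrite ler_wpM2l.
have Hup : forall j, j \notin S ->
    vnorm (adj (blkm D j) *m y) <= #|S|%:R * m + e.
  move=> j jS; rewrite Hdec; apply: le_trans (vnormD _ _) _; apply: lerD => //.
  apply: le_trans (vnorm_sum _ _) _.
  apply: le_trans (ler_sum _ (G := fun _ => m) _) _.
    move=> l lS; apply: le_trans (cross_le d0 Hmu _ _) _.
      by apply: contraNneq jS => <-.
    by rewrite ler_wpM2l ?mulr_ge0 ?ler0n // hxmax.
  by rewrite sumr_const mulr_natl.
have Hlow : forall i, i \in S ->
    (1 - c) * xmin x - ((#|S|%:R - 1) * m + e) <= vnorm (adj (blkm D i) *m y).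
  move=> i iS; rewrite Hdec (bigD1 i) //= -addrA.
  apply: le_trans _ (vnormB_ge _ _); apply: lerB.
    apply: le_trans (gram_lower unitcol i _).
    by apply: ler_wpM2l; [exact: ltW | exact: hxmin].
  apply: le_trans (vnormD _ _) _; apply: lerD => //.
  apply: le_trans (vnorm_sum _ _) _.
  apply: le_trans (ler_sum _ (G := fun _ => m) _) _.
    move=> l /andP[lS li]; apply: le_trans (cross_le d0 Hmu _ li) _.
    by rewrite ler_wpM2l ?mulr_ge0 ?ler0n // hxmax.
  by rewrite sum_neq // sumr_const mulrBl mul1r mulr_natl.
have SS : S \subset Shat.
  apply/subsetP => i iS; apply/negPn/negP => iNS.
  have [j jSh jNS] : exists2 j, j \in Shat & j \notin S.
    apply/subsetPn/negP => sub.
    have : (#|Shat| <= #|S :\ i|)%N.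
      apply: subset_leq_card; apply/subsetP => j jSh; rewrite in_setD1 (subsetP sub j jSh) andbT.
      by apply: contraNneq iNS => <-.
    rewrite cardS => H; have := cardsD1 i S; rewrite iS add1n => E.
    by move: Sk; rewrite E => /leq_trans /(_ H); rewrite ltnn.
  have H := le_trans (Hlow i iS) (le_trans (Hsel j i jSh iNS) (Hup j jNS)).
  have : (1 - c) * xmin x <= (k%:R - 1) * m + e + (k%:R * m + e).
    move: H; rewrite lerBlDr => H; apply: le_trans H _; rewrite addrC.
    have hSk : #|S|%:R <= k%:R :> C by rewrite ler_nat.
    by apply: lerD; apply: lerD => //; apply: ler_wpM2r => //; rewrite ?lerD2r.
  by move=> H'; have := le_lt_trans H' cond'; rewrite ltxx.
split => //.
have hxmm : xmin x <= xmax x := le_trans (hxmin i0 i0S) (hxmax i0 i0S).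
have hxmaxp : 0 < xmax x := lt_le_trans hxminp hxmm.
have hlam : 0 < 1 - c - (k%:R - 1) * d%:R * muB.
  rewrite subr_gt0 -(ltr_pM2r hxmaxp).
  have -> : (k%:R - 1) * d%:R * muB * xmax x = (k%:R - 1) * m by rewrite /m !mulrA.
  have h2 : (k%:R - 1) * m <= (k%:R - 1) * m + e + (k%:R * m + e).
    by rewrite -addrA lerDl; apply: addr_ge0 => //; apply: addr_ge0 => //; apply: mulr_ge0.
  apply: le_lt_trans h2 (lt_le_trans cond' _).
  by apply: ler_wpM2l => //; apply: ltW.
set A := subm D Shat.
case: Hpinv => h1 h2 h3 h4.
have Hx_out : forall i, i \notin Shat -> blkv x i = 0.
  by move=> i iN; apply: supp_out; apply: contra iN; apply: (subsetP SS).
have eAx : D *m x = A *m subv x Shat := mul_subm D Hx_out.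
have rankA : \rank A = (#|Shat| * d)%N by apply: rankH; rewrite cardS.
have PA : P *m A = 1%:M.
  have rf : row_free A^T by rewrite /row_free mxrank_tr rankA.
  have : (P *m A - 1%:M)^T *m A^T == 0.
    by rewrite -trmx_mul mulmxBr mulmxA h1 mulmx1 subrr trmx0.
  rewrite mulmx_free_eq0 // => /eqP H.
  by apply/eqP; rewrite -subr_eq0; apply/eqP/trmx_inj; rewrite H trmx0.
have exh : subv xhat Shat = subv x Shat + P *m w.
  by rewrite Hsub ey eAx mulmxDr mulmxA PA mul1mx.
have Hdiff : vnorm2 (xhat - x) = vnorm2 (P *m w).
  rewrite (vnorm2_subv (I := Shat)); last first.
    by move=> i iN; rewrite blkvB Hout // Hx_out // subrr.
  by rewrite subvB exh addrC addKr.
set z := P *m w in Hdiff.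
have [zh [zh_out zh_sub]] := embed z.
have hAz : A *m z = D *m zh by rewrite (mul_subm D zh_out) zh_sub.
have hz : vnorm2 z = vnorm2 zh by rewrite (vnorm2_subv zh_out) zh_sub.
have Hg := gram_multi unitcol d0 Hmu (k := k) (eq_leq cardS) zh_out.
have Hproj : vnorm (A *m P *m w) ^+ 2 <= vnorm w ^+ 2.
  by apply: proj_le => //; rewrite mulmxA h1.
rewrite Hdiff ler_pdivlMr // mulrC hz -vnorm_sqr.
apply: le_trans Hg _; rewrite -hAz /z mulmxA; apply: le_trans Hproj _.
by rewrite !expr2; apply: ler_pM => //; apply: vnorm_ge0.
Qed.
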